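(* Let $\mathcal{R}$ be the involutive system $u_{ij}=f_{ij}(x^1,x^2,x^3,u,u_i,u_j)$, $1\le i<j\le3$, let $\Theta=\mu\theta$ satisfy on $\mathcal{R}^\infty$ the system $X_lX_k(\Theta)+A^l_{lk}X_l(\Theta)+A^k_{lk}X_k(\Theta)+C_{lk}\Theta=0$ ($1\le l\ne k\le3$), and let $\xi_{ij}=X_j(\Theta)+A^i_{ij}\Theta$ be the $(i,j)$ Laplace transform of $\Theta$ for an ordered pair $i\ne j$. Let $\hat A^j_{ij}$ denote the coefficient of $X_j(\xi_{ij})$ in the $(i,j)$ equation $X_iX_j(\xi_{ij})+\hat A^i_{ij}X_i(\xi_{ij})+\hat A^j_{ij}X_j(\xi_{ij})+\hat C_{ij}\xi_{ij}=0$ of the system satisfied by $\xi_{ij}$, and let $\mathcal{X}_{ji}(\xi_{ij})=X_i(\xi_{ij})+\hat A^j_{ij}\xi_{ij}$ be the $(j,i)$ Laplace transform of $\xi_{ij}$ with respect to that system. If $H_{ij}\neq0$, then the $(i,j)$ Laplace transform has an inverse given by $\Theta=\frac{1}{H_{ij}}\,\mathcal{X}_{ji}(\xi_{ij}).$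
   Context: Setting: $U\subset\mathbb{R}^3$ open connected, $E=U\times(a,b)\to U$ trivial bundle, $J^\infty(E)$ with contact forms $\theta_I=du_I-\sum_ju_{Ij}dx^j$, $\theta=du-\sum_iu_idx^i$. $\mathcal{R}$: $F_{ij}:=u_{ij}-f_{ij}(x^1,x^2,x^3,u,u_i,u_j)=0$, $1\le i<j\le3$, $f_{ij}$ smooth with $D_kf_{ij}=D_if_{kj}$ for distinct $i,j,k$; $\mathcal{R}^\infty$ its infinite prolongation; $X_i=D_i$ the commuting total derivatives on $\mathcal{R}^\infty$, acting on contact forms by projected Lie derivative, $X_j(\theta_I)=\theta_{Ij}$. With $a^i_{ij}=\partial F_{ij}/\partial u_i$, $a^j_{ij}=\partial F_{ij}/\partial u_j$, $c_{ij}=\partial F_{ij}/\partial u$ and a nonvanishing function $\mu$, $\Theta=\mu\theta$ satisfies the system above with $A^i_{ij}=a^i_{ij}-X_j(\mu)/\mu$, $A^j_{ij}=a^j_{ij}-X_i(\mu)/\mu$, $C_{ij}=c_{ij}-X_iX_j(\mu)/\mu-a^i_{ij}X_i(\mu)/\mu-a^j_{ij}X_j(\mu)/\mu+2X_i(\mu)X_j(\mu)/\mu^2$, coefficients symmetric in lower indices. Laplace invariant: $H_{ij}=D_i(A^i_{ij})+A^i_{ij}A^j_{ij}-C_{ij}$. *)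

(* Defs.v *)
(* abstract differential-algebra model of R^infty.
   R  = ring of (smooth) functions on R^infty,
   M  = R-module of contact forms on R^infty,
   D k = total derivative X_k acting on functions,
   X k = total derivative X_k acting on contact forms (projected Lie derivative). *)
From HB Require Import structures.
From mathcomp Require Import all_boot all_order all_algebra.
Set Implicit Arguments. Unset Strict Implicit. Unset Printing Implicit Defensive.
Import Order.TTheory GRing.Theory Num.Theory.
Local Open Scope ring_scope.

Section Defs.
Variables (R : comUnitRingType) (M : lmodType R).

Definition derivation_family (D : 'I_3 -> R -> R) : Prop :=
  [/\ (forall k f g, D k (f + g) = D k f + D k g),
      (forall k f g, D k (f * g) = D k f * g + f * D k g) &
      (forall k l f, D k (D l f) = D l (D k f))].

Definition compatible_action (D : 'I_3 -> R -> R) (X : 'I_3 -> M -> M) : Prop :=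
  [/\ (forall k m n, X k (m + n) = X k m + X k n),
      (forall k f m, X k (f *: m) = D k f *: m + f *: X k m) &
      (forall k l m, X k (X l m) = X l (X k m))].

(* theta, theta_k = X_k theta, theta_kk = X_k X_k theta (k = 1,2,3) are part of
   the contact basis of R^infty, hence linearly independent over functions. *)
Definition contact_indep (X : 'I_3 -> M -> M) (theta : M) : Prop :=
  forall (c0 : R) (c1 c2 : 'I_3 -> R),
    c0 *: theta + \sum_(k < 3) c1 k *: X k theta
      + \sum_(k < 3) c2 k *: X k (X k theta) = 0 ->
    c0 = 0 /\ (forall k, c1 k = 0 /\ c2 k = 0).

(* Convention: a l k = a^l_{lk} = dF_{lk}/du_l, c l k = c_{lk};
   Acoef l k = A^l_{lk} (coefficient of X_l in the (l,k) equation). *)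
Definition Acoef (D : 'I_3 -> R -> R) (a : 'I_3 -> 'I_3 -> R) (mu : R) (l k : 'I_3) : R :=
  a l k - D k mu / mu.

Definition Ccoef (D : 'I_3 -> R -> R) (a c : 'I_3 -> 'I_3 -> R) (mu : R) (l k : 'I_3) : R :=
  c l k - D l (D k mu) / mu - a l k * D l mu / mu - a k l * D k mu / mu
    + 2%:R * D l mu * D k mu / mu ^+ 2.

Definition Hinv (D : 'I_3 -> R -> R) (a c : 'I_3 -> 'I_3 -> R) (mu : R) (i j : 'I_3) : R :=
  D i (Acoef D a mu i j) + Acoef D a mu i j * Acoef D a mu j i - Ccoef D a c mu i j.

Definition laplace (X : 'I_3 -> M -> M) (A : 'I_3 -> 'I_3 -> R) (Theta : M) (i j : 'I_3) : M :=
  X j Theta + A i j *: Theta.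

End Defs.

(* Main.v *)
Require Import Defs.
From HB Require Import structures.
From mathcomp Require Import all_boot all_order all_algebra.
From mathcomp Require Import ring.
Import Order.TTheory GRing.Theory Num.Theory.
Local Open Scope ring_scope.
Set Implicit Arguments. Unset Strict Implicit.

Section Aux.
Variables (R : comUnitRingType) (M : lmodType R).

Definition F4 (vs : M * M * M * M) (a b c d : R) : M :=
  a *: vs.1.1.1 + b *: vs.1.1.2 + c *: vs.1.2 + d *: vs.2.

Lemma F4D vs a b c d a' b' c' d' :
  F4 vs a b c d + F4 vs a' b' c' d' = F4 vs (a + a') (b + b') (c + c') (d + d').
Proof.
rewrite /F4 !scalerDl addrACA; congr (_ + _); rewrite addrACA; congr (_ + _).
by rewrite addrACA.
Qed.

Lemma F4Z vs r a b c d : r *: F4 vs a b c d = F4 vs (r * a) (r * b) (r * c) (r * d).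
Proof. by rewrite /F4 !scalerDr !scalerA. Qed.

Lemma F4N vs a b c d : - F4 vs a b c d = F4 vs (- a) (- b) (- c) (- d).
Proof. by rewrite /F4 !opprD !scaleNr. Qed.

Lemma F4_1 vs : vs.1.1.1 = F4 vs 1 0 0 0.
Proof. by rewrite /F4 scale1r !scale0r !addr0. Qed.
Lemma F4_2 vs : vs.1.1.2 = F4 vs 0 1 0 0.
Proof. by rewrite /F4 scale1r !scale0r add0r !addr0. Qed.
Lemma F4_3 vs : vs.1.2 = F4 vs 0 0 1 0.
Proof. by rewrite /F4 scale1r !scale0r !add0r addr0. Qed.
Lemma F4_4 vs : vs.2 = F4 vs 0 0 0 1.
Proof. by rewrite /F4 scale1r !scale0r !add0r. Qed.

Lemma F4_eq vs a b c d a' b' c' d' :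
  a = a' -> b = b' -> c = c' -> d = d' -> F4 vs a b c d = F4 vs a' b' c' d'.
Proof. by move=> -> -> -> ->. Qed.

Variables (D : 'I_3 -> R -> R) (X : 'I_3 -> M -> M).
Hypothesis hX : compatible_action D X.

Lemma XD k m n : X k (m + n) = X k m + X k n.
Proof. by case: hX. Qed.
Lemma XZ k f m : X k (f *: m) = D k f *: m + f *: X k m.
Proof. by case: hX. Qed.
Lemma Xcomm k l m : X k (X l m) = X l (X k m).
Proof. by case: hX. Qed.
Lemma X0 k : X k 0 = 0.
Proof. by apply/esym/(addrI (X k 0)); rewrite addr0 -XD addr0. Qed.
Lemma XN k m : X k (- m) = - X k m.
Proof. by apply/eqP; rewrite -subr_eq0 opprK -XD addNr X0. Qed.

Lemma sum_single (j : 'I_3) (b : R) (f : 'I_3 -> M) :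
  \sum_(k < 3) (if k == j then b else 0) *: f k = b *: f j.
Proof.
rewrite (bigD1 j) //= eqxx big1 ?addr0 // => k /negbTE ->; exact: scale0r.
Qed.

Lemma F4_indep theta j a b c d : contact_indep X theta ->
  F4 (theta, X j theta, X j (X j theta), 0) a b c d = 0 -> c = 0.
Proof.
move=> hind; rewrite /F4 /= scaler0 addr0 => h.
have := hind a (fun k => if k == j then b else 0) (fun k => if k == j then c else 0).
rewrite (sum_single j b (fun k => X k theta)) (sum_single j c (fun k => X k (X k theta))).
by case/(_ h) => _ /(_ j) [] _; rewrite eqxx.
Qed.

Lemma step1 (T : M) (A1 A2 C : R) (i j : 'I_3) :
  X i (X j T) + A1 *: X i T + A2 *: X j T + C *: T = 0 ->
  X i (X j T + A1 *: T) = (D i A1 + A1 * A2 - C) *: T - A2 *: (X j T + A1 *: T).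
Proof.
move=> E; apply/eqP; rewrite -subr_eq0 -[Z in _ == Z]E; apply/eqP.
rewrite XD XZ.
pose vs := (X i (X j T), X i T, X j T, T).
rewrite -[X i (X j T)]/(vs.1.1.1) -[X i T]/(vs.1.1.2) -[X j T]/(vs.1.2) -[T]/(vs.2).
rewrite (F4_1 vs) (F4_2 vs) (F4_3 vs) (F4_4 vs) !(F4N, F4Z, F4D).
by apply: F4_eq; ring.
Qed.

Lemma step2 (theta : M) (mu : R) (i j : 'I_3) (A1 A2 H Ahi Ahj Chat : R) (T xi : M) :
  contact_indep X theta -> mu \is a GRing.unit ->
  T = mu *: theta -> xi = X j T + A1 *: T ->
  X i xi = H *: T - A2 *: xi ->
  X i (X j xi) + Ahi *: X i xi + Ahj *: X j xi + Chat *: xi = 0 -> Ahj = A2.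
Proof.
move=> hind hmu hT hxi S1 E.
rewrite [X i (X j xi)]Xcomm S1 in E.
rewrite hxi hT in E.
rewrite !(XD, XN, XZ) in E.
pose vs := (theta, X j theta, X j (X j theta), (0 : M)).
rewrite -[X j (X j theta)]/(vs.1.2) -[X j theta]/(vs.1.1.2) -[theta]/(vs.1.1.1) in E.
rewrite (F4_1 vs) (F4_2 vs) (F4_3 vs) !(F4N, F4Z, F4D) in E.
have H2 := F4_indep hind E.
have : (Ahj - A2) * mu = 0 by apply: (etrans _ H2); ring.
move/(congr1 (fun x => x * mu^-1)); rewrite mulrK // mul0r => /eqP.
by rewrite subr_eq0 => /eqP.
Qed.

End Aux.

Theorem proposition3p7 (R : comUnitRingType) (M : lmodType R)
  (D : 'I_3 -> R -> R) (X : 'I_3 -> M -> M) (theta : M)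
  (a c : 'I_3 -> 'I_3 -> R) (mu : R) (i j : 'I_3) (Ahi Ahj Chat : R) :
  derivation_family D ->
  compatible_action D X ->
  contact_indep X theta ->
  (forall l k, c l k = c k l) ->
  (* theta satisfies the linearized equations on R^infty *)
  (forall l k, l != k ->
     X l (X k theta) + a l k *: X l theta + a k l *: X k theta + c l k *: theta = 0) ->
  mu \is a GRing.unit ->
  (* Theta = mu theta satisfies the system with coefficients A, C *)
  (forall l k, l != k ->
     X l (X k (mu *: theta)) + Acoef D a mu l k *: X l (mu *: theta)
       + Acoef D a mu k l *: X k (mu *: theta) + Ccoef D a c mu l k *: (mu *: theta) = 0) ->
  i != j ->
  (* the (i,j) equation satisfied by xi_{ij}, with Ahj = hat A^j_{ij} *)
  X i (X j (laplace X (Acoef D a mu) (mu *: theta) i j))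
    + Ahi *: X i (laplace X (Acoef D a mu) (mu *: theta) i j)
    + Ahj *: X j (laplace X (Acoef D a mu) (mu *: theta) i j)
    + Chat *: laplace X (Acoef D a mu) (mu *: theta) i j = 0 ->
  Hinv D a c mu i j \is a GRing.unit ->
  mu *: theta =
    (Hinv D a c mu i j)^-1 *:
      (X i (laplace X (Acoef D a mu) (mu *: theta) i j)
        + Ahj *: laplace X (Acoef D a mu) (mu *: theta) i j).
Proof.
move=> hD hX hind hc hth hmu hT hij hxi hH.
have S1 : X i (laplace X (Acoef D a mu) (mu *: theta) i j) =
  Hinv D a c mu i j *: (mu *: theta)
  - Acoef D a mu j i *: laplace X (Acoef D a mu) (mu *: theta) i j
  := step1 hX (hT i j hij).
have hA := step2 hX hind hmu erefl erefl S1 hxi.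
by rewrite S1 hA subrK [_^-1 *: _]scalerA mulVr ?scale1r.
Qed.
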